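(* Let $T\ge1$ and $0<\eta\le\frac{1}{5\sqrt T}$, and suppose $d:=\max\{25\eta^2T^2,1\}$ is a positive integer. Let $f(w)=\max\{0,\max_{i\in[d]}(\frac{1}{\sqrt d}-w[i]-\frac{\eta i}{4d})\}$ on $\mathbb R^d$ and run unprojected GD $w_1=0$, $w_{t+1}=w_t-\eta\nabla f(w_t)$ for $1\le t<T$. Then (i) $w_t\in\mathbb B^d$ (the closed unit ball) for all $t\in[T]$; and (ii) for every $m\in\{1,\dots,T\}$, the suffix average $w_{T,m}=\frac1m\sum_{i=1}^m w_{T-i+1}$ satisfies $$f(w_{T,m})-\inf_{w\in\mathbb R^d}f(w)\ \ge\ \min\Big\{\frac14,\ \frac{1}{20\eta T}\Big\}.$$
   Context: $w[i]$ denotes the $i$-th coordinate of $w$. *)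

(* Defs.v *)
From HB Require Import structures.
From mathcomp Require Import all_boot all_order all_algebra.
From mathcomp Require Import boolp classical_sets reals.
Set Implicit Arguments. Unset Strict Implicit. Unset Printing Implicit Defensive.
Import Order.TTheory GRing.Theory Num.Theory.
Local Open Scope ring_scope.
Local Open Scope classical_set_scope.

(* Vectors in R^d are functions 'I_d -> R; coordinate i : 'I_d is the
   paper's coordinate i+1 (paper indexes [d] = {1,...,d}). *)
Definition vec (R : realType) (d : nat) := 'I_d -> R.

Definition dotv (R : realType) (d : nat) (u v : vec R d) : R :=
  \sum_(i < d) u i * v i.

Definition norm2 (R : realType) (d : nat) (u : vec R d) : R :=
  Num.sqrt (dotv u u).

Definition fhard (R : realType) (d : nat) (eta : R) (w : vec R d) : R :=
  Num.max 0 (\big[Num.max/0]_(j < d)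
     ((Num.sqrt d%:R)^-1 - w j - eta * (val j).+1%:R / (4 * d%:R))).

Definition is_subgrad (R : realType) (d : nat) (f : vec R d -> R)
  (w g : vec R d) : Prop :=
  forall v : vec R d, f w + dotv g (fun i => v i - w i) <= f v.

Definition suffix_avg (R : realType) (d : nat) (w : nat -> vec R d)
  (T m : nat) : vec R d :=
  fun j => m%:R^-1 * \sum_(1 <= i < m.+1) w (T - i + 1)%N j.

(* Main.v *)
Require Import Defs.
From HB Require Import structures.
From mathcomp Require Import all_boot all_order all_algebra.
From mathcomp Require Import boolp classical_sets reals.
From mathcomp Require Import ring lra.
Import Order.TTheory GRing.Theory Num.Theory.
Local Open Scope ring_scope.
Local Open Scope classical_set_scope.

Definition piece (R : realType) (d : nat) (eta : R) (w : vec R d) (j : 'I_d) : R :=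
  (Num.sqrt d%:R)^-1 - w j - eta * (val j).+1%:R / (4 * d%:R).

Arguments piece {R d}.

Lemma fhard_ge (R : realType) (d : nat) (eta : R) (w : vec R d) j : piece eta w j <= fhard eta w.
Proof.
rewrite /fhard le_max; apply/orP; right.
exact: (le_bigmax _ (fun j => piece eta w j)).
Qed.

Lemma fhard_ge0 (R : realType) d (eta : R) (w : vec R d) : 0 <= fhard eta w.
Proof. by rewrite /fhard le_max lexx. Qed.

Lemma fhard_le (R : realType) (d : nat) (eta : R) (w : vec R d) M :
  0 <= M -> (forall j, piece eta w j <= M) -> fhard eta w <= M.
Proof.
move=> h0 hj; rewrite /fhard ge_max h0 /=.
by apply: bigmax_le => // i _; exact: hj.
Qed.

Lemma fhard_eq (R : realType) (d : nat) (eta : R) (w : vec R d) (r : 'I_d) M :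
  piece eta w r = M -> (forall j, piece eta w j <= M) -> 0 <= M -> fhard eta w = M.
Proof.
move=> hr hj h0; apply/eqP; rewrite eq_le fhard_le //=.
by rewrite -hr fhard_ge.
Qed.

Lemma subgrad_unique (R : realType) (d : nat) (eta : R) (w g : vec R d) (r : 'I_d) (del : R) :
  0 < del -> del <= piece eta w r ->
  (forall j, j != r -> piece eta w j + del <= piece eta w r) ->
  is_subgrad (@fhard R d eta) w g -> forall k, g k = if k == r then -1 else 0.
Proof.
move=> hdel hpos hgap hsub k.
have key : forall s, -del <= s -> s <= del ->
   fhard eta (fun i => w i + (if i == k then s else 0)) =
   piece eta w r - (if k == r then s else 0).
  move=> s hs1 hs2; apply: (@fhard_eq R d eta _ r).
  - rewrite /piece eq_sym; case: (r == k); lra.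
  - move=> j; case: (eqVneq j r) => [->|hjr].
      rewrite /piece eq_sym; case: (r == k); lra.
    have := hgap j hjr; rewrite /piece.
    case: (eqVneq k r) => [ekr|nkr].
      rewrite ekr (negbTE hjr); lra.
    case: (j == k); lra.
  - case: (k == r); lra.
have fw : fhard eta w = piece eta w r.
  apply: (@fhard_eq R d eta _ r) => //; last lra.
  move=> j; case: (eqVneq j r) => [->|hjr]; first lra.
  have := hgap j hjr; lra.
have dot : forall s, dotv g (fun i => (w i + (if i == k then s else 0)) - w i) = g k * s.
  move=> s; rewrite /dotv (bigD1 k) //= eqxx addrAC subrr add0r big1 ?addr0 //.
  by move=> i hik; rewrite (negbTE hik) addr0 subrr mulr0.
have ineq : forall s, -del <= s -> s <= del ->
   piece eta w r + g k * s <= piece eta w r - (if k == r then s else 0).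
  move=> s h1 h2; rewrite -key // -dot -fw; exact: hsub.
have i1 := ineq del ltac:(lra) ltac:(lra).
have i2 := ineq (- del) ltac:(lra) ltac:(lra).
case: (k == r) i1 i2 => i1 i2; apply/eqP; rewrite eq_le; apply/andP; split; nra.
Qed.
Lemma my_natstep (n d j : nat) : (0 < d)%N -> (j < d)%N -> (n%/d + (j < n%%d) + (j == n%%d) = n.+1 %/ d + (j < n.+1 %% d))%N.
Proof.
move=> hd hj.
have hr : (n %% d < d)%N by rewrite ltn_mod.
have em : (n.+1 %% d = (n %% d).+1 %% d)%N by rewrite -addn1 -modnDml addn1.
rewrite (divnS _ hd) /dvdn em.
have [h|h] := ltnP (n%%d).+1 d.
  rewrite (modn_small h) /= add0n -addnA; congr (_ + _)%N.
  by rewrite ltnS; case: (ltngtP j (n %% d)).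
have hd' : (n %% d).+1 = d by apply/eqP; rewrite eqn_leq hr h.
rewrite hd' modnn /= ?ltn0 ?addn0 add1n -addnA -[(n %/ d).+1]addn1; congr (_ + _)%N.
have : (j <= n %% d)%N by rewrite -ltnS hd'.
by case: (ltngtP j (n %% d)).
Qed.

Theorem mainTheorem13 (R : realType) (T d : nat) (eta : R)
  (w g : nat -> vec R d) :
  (1 <= T)%N ->
  0 < eta ->
  eta <= (5 * Num.sqrt T%:R)^-1 ->
  d%:R = Num.max (25 * eta ^+ 2 * T%:R ^+ 2) 1 ->
  (0 < d)%N ->
  w 1%N = (fun _ => 0) ->
  (forall t : nat, (1 <= t < T)%N ->
     is_subgrad (@fhard R d eta) (w t) (g t) /\
     w t.+1 = (fun i => w t i - eta * g t i)) ->
  (forall t : nat, (1 <= t <= T)%N -> norm2 (w t) <= 1) /\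
  (forall m : nat, (1 <= m <= T)%N ->
     @fhard R d eta (suffix_avg w T m) - inf (range (@fhard R d eta))
       >= Num.min (4%:R^-1) ((20 * eta * T%:R)^-1)).
Proof.
move=> hT heta hetaT hd hd0 hw1 hstep.
have D0 : 0 < (d%:R : R) by rewrite ltr0n.
have D1 : 1 <= (d%:R : R) by rewrite hd le_max lexx orbT.
have hs2 : Num.sqrt (d%:R : R) ^+ 2 = d%:R := sqr_sqrtr (ltW D0).
have s0 : 0 <= Num.sqrt (d%:R : R) := sqrtr_ge0 _.
have T1 : 1 <= (T%:R : R) by rewrite ler1n.
have hsT : Num.sqrt (T%:R : R) ^+ 2 = T%:R by rewrite sqr_sqrtr // ler0n.
have st0 : 0 <= Num.sqrt (T%:R : R) := sqrtr_ge0 _.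
have hdmax := hd.
move: hd hetaT hsT st0 hs2 s0 D0 D1 T1.
set D := (d%:R : R); set s := Num.sqrt D; set TT := (T%:R : R); set st := Num.sqrt TT.
move=> hd hetaT hsT st0 hs2 s0 D0 D1 T1.
have s1 : 1 <= s by nra.
have st1 : 1 <= st by nra.
have hinv : (5 * st)^-1 * (5 * st) = 1 by rewrite mulVf //; lra.
have h5 : eta * (5 * st) <= 1 by nra.
have h25 : 25 * eta ^+ 2 * TT <= 1.
  have : (eta * (5*st)) * (eta*(5*st)) <= 1 * 1 by apply: ler_pM => //; nra.
  by rewrite -hsT; nra.
have hDge : 25 * eta ^+ 2 * TT ^+ 2 <= D by rewrite hd le_max lexx.
have hA : 5 * eta * TT <= s by nra.
have DT : D <= TT.
  rewrite hd ge_max T1 andbT; nra.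
have hB : 5 * eta * s <= 1 by nra.
have hu : s^-1 * s = 1 by rewrite mulVf //; lra.
have u0 : 0 < s^-1 by rewrite invr_gt0; lra.
set e := eta / (4 * D).
have he : eta = e * (4 * D) by rewrite /e divfK //; lra.
have e0 : 0 < e by rewrite /e divr_gt0 //; lra.
have hQ : forall n, (n < T)%N -> eta * (n %/ d)%:R * s <= 5^-1.
  move=> n hn.
  have : ((n %/ d)%:R * D <= TT).
    rewrite /D /TT -natrM ler_nat; apply: leq_trans (leq_divM n d) _; exact: ltnW.
  move=> hQD.
  have : eta * (n %/ d)%:R * s * s <= 5^-1 * s.
    rewrite -mulrA -expr2 hs2; nra.
  move=> h; nra.
have pe : forall a, eta * a / (4 * D) = e * a.
  by move=> a; rewrite /e mulrAC.
have inv : forall n, (n < T)%N ->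
   w n.+1 = (fun j : 'I_d => eta * (n %/ d + (j < n %% d))%:R).
  elim=> [|n IH] hn.
    rewrite hw1; apply: funext => j /=.
    by rewrite div0n mod0n ltn0 mulr0.
  have hn' : (n < T)%N by exact: ltnW.
  have [hsg hw] := hstep n.+1 ltac:(by rewrite hn).
  rewrite hw; rewrite IH // in hsg *.
  set r : 'I_d := Ordinal (ltn_pmod n hd0).
  have hQn := hQ n hn'.
  have hRr : (n %% d)%:R + 1 <= D by rewrite natr1 ler_nat ltn_pmod.
  have Q0 : 0 <= ((n %/ d)%:R : R) by rewrite ler0n.
  have hpos : e <= piece eta (fun j : 'I_d => eta * (n %/ d + (j < n %% d))%:R) r.
    rewrite /piece pe /= ltnn addn0 -natr1.
    have h1 : eta * (n %/ d)%:R <= 5^-1 * s^-1.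
      have := ler_wpM2r (ltW u0) hQn; rewrite mulfK //; lra.
    have h2 : eta <= 5^-1 * s^-1.
      have : eta * s <= 5^-1 by lra.
      move=> h; have := ler_wpM2r (ltW u0) h; rewrite mulfK //; lra.
    have h3 : e * ((n %% d)%:R + 1 + 1) <= e * (D + 1) by rewrite ler_pM2l //; lra.
    have h4 : e * (D + 1) <= e * (2 * D) by rewrite ler_pM2l //; lra.
    have h5' : e * (2 * D) = eta / 2 by rewrite he; field.
    lra.
  have hgap : forall j, j != r -> piece eta (fun j : 'I_d => eta * (n %/ d + (j < n %% d))%:R) j + e
     <= piece eta (fun j : 'I_d => eta * (n %/ d + (j < n %% d))%:R) r.
    move=> j hjr; rewrite /piece !pe /= ltnn addn0.
    have hj := ltn_ord j.
    have J0 : 0 <= (val j)%:R :> R by rewrite ler0n.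
    case: (ltngtP (val j) (n %% d)%N) => hjn.
    + have hJ : (val j)%:R + 1 <= ((n %% d)%N)%:R :> R by rewrite natr1 ler_nat.
      rewrite ?addn1 ?addn0 -?natr1.
      have := mulr_ge0 (ltW e0) (_ : 0 <= 4 * D - 1 - ((n %% d)%N%:R - (val j)%:R)).
      rewrite he; move=> H; (have := H ltac:(lra)); nra.
    + have hJ : ((n %% d)%N)%:R + 1 <= (val j)%:R :> R by rewrite natr1 ler_nat.
      rewrite ?addn1 ?addn0 -?natr1.
      have := mulr_ge0 (ltW e0) (_ : 0 <= (val j)%:R - ((n %% d)%N%:R + 1)).
      move=> H; (have := H ltac:(lra)); nra.
    + by move/eqP: hjr; case; apply: val_inj.
  have hg := @subgrad_unique R d eta _ _ r e e0 hpos hgap hsg.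
  apply: funext => j; rewrite (hg j) -(my_natstep n d j hd0 (ltn_ord j)).
  have -> : (j == r) = (val j == (n %% d)%N) by [].
  case: (val j == (n %% d)%N); rewrite /= ?natrD /= ?addn0; lra.
have bnd : forall t, (1 <= t <= T)%N -> forall j, 0 <= w t j /\ w t j * s <= 2/5.
  move=> [|n] // /andP[_ hn] j.
  rewrite inv //=.
  have hQn := hQ n hn.
  have B0 : 0 <= ((j < (n %% d)%N) : nat)%:R :> R by rewrite ler0n.
  have B1 : ((j < (n %% d)%N) : nat)%:R <= 1 :> R by rewrite -[1 in X in _ <= X](mulr1n 1) ler_nat leq_b1.
  split; first by apply: mulr_ge0; [lra | rewrite ler0n].
  rewrite natrD.
  have := mulr_ge0 (_ : 0 <= eta * s) (_ : 0 <= 1 - ((j < (n %% d)%N) : nat)%:R).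
  move=> H; have := H ltac:(nra) ltac:(lra); nra.
have hu1 : s^-1 <= 1 by nra.
split.
  move=> t ht.
  rewrite /norm2; apply: le_trans (_ : _ <= Num.sqrt 1) _; last by rewrite sqrtr1.
  rewrite ler_sqrt ?ler01 // /dotv.
  apply: le_trans (_ : _ <= \sum_(j < d) (4/25 / D)) _.
    apply: ler_sum => j _; have [h0 h1] := bnd t ht j.
    have := ler_pM (mulr_ge0 h0 s0) (mulr_ge0 h0 s0) h1 h1.
    rewrite ler_pdivlMr // -hs2 expr2; nra.
  rewrite sumr_const card_ord -[X in X <= _]mulr_natr divfK; lra.
move=> m /andP[hm1 hmT].
have inf0 : inf (range (@fhard R d eta)) <= 0.
  have lb : has_lbound (range (@fhard R d eta)).
    by exists 0 => y [x _ <-]; exact: fhard_ge0.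
  have hin : range (@fhard R d eta) (@fhard R d eta (fun _ : 'I_d => 1)) by exists (fun _ : 'I_d => 1).
  have hi : inf (range (@fhard R d eta)) <= @fhard R d eta (fun _ : 'I_d => 1) := ge_inf lb hin.
  apply: le_trans hi _.
  apply: fhard_le => // j; rewrite /piece pe.
  have : 0 <= e * (val j).+1%:R by apply: mulr_ge0; [lra | rewrite ler0n].
  lra.
set r0 : 'I_d := Ordinal hd0.
have hpc := fhard_ge R d eta (suffix_avg w T m) r0.
have avg : suffix_avg w T m r0 <= 2/5 * s^-1.
  rewrite /suffix_avg.
  apply: le_trans (_ : _ <= m%:R^-1 * \sum_(1 <= i < m.+1) (2/5 * s^-1)) _.
    apply: ler_wpM2l; first by rewrite invr_ge0 ler0n.
    apply: ler_sum_nat => i /andP[hi1 hi2].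
    have [h0 h1] := bnd (T - i + 1)%N ltac:(by rewrite addn1 ltn0Sn /= ltn_subrL hi1 hT) r0.
    have := ler_wpM2r (ltW u0) h1; rewrite mulfK //; lra.
  rewrite sumr_const_nat subn1 /= -(mulr_natr (2/5/s) m) mulrC mulfK //.
  by rewrite pnatr_eq0 -lt0n.
have e4 : e * 4 <= eta by rewrite he; nra.
have h2 : eta <= 5^-1 * s^-1.
  have : eta * s <= 5^-1 by lra.
  move=> h; have := ler_wpM2r (ltW u0) h; rewrite mulfK //; lra.
have key : 55/100 * s^-1 <= fhard eta (suffix_avg w T m) - inf (range (@fhard R d eta)).
  move: hpc; rewrite /piece pe /=; lra.
move: hd; case: (leP (25 * eta ^+ 2 * TT ^+ 2) 1) => hc hd.
  have s_1 : s = 1 by rewrite /s hd sqrtr1.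
  rewrite ge_min; apply/orP; left; move: key; rewrite s_1 invr1; lra.
have s_e : s = 5 * eta * TT.
  apply/eqP; rewrite eq_le hA andbT.
  have x0 : 0 <= 5 * eta * TT by nra.
  have hx : s * s = (5 * eta * TT) * (5 * eta * TT) by rewrite -expr2 hs2 hd; ring.
  nra.
rewrite ge_min; apply/orP; right.
have -> : 20 * eta * TT = 4 * s by rewrite s_e; ring.
rewrite invfM; lra.
Qed.
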